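(* Let $F=(f_1,\dots,f_s)$ be nonzero polynomials in $K[\mathbf{X}]$. Then the vertices of the Newton polyhedron $\mathscr N(F)$ are in one-to-one correspondence with the equivalence classes of term orders with respect to $F$.
   Context: $K$ is a field complete for a discrete valuation $\mathrm{val}$. A term is $c\mathbf{X}^\alpha$ with $c\in K^\times$. For $\mathbf{r}\in\mathbb{Q}^n$, $\mathrm{val}_{\mathbf{r}}(c\mathbf{X}^\alpha)=\mathrm{val}(c)-\mathbf{r}\cdot\alpha$. The term orders considered are those of the form $<_{\mathbf{r},m}$ with $\mathbf{r}\in\mathbb{Q}^n$ and $\le_m$ a monomial order: $a\mathbf{X}^\alpha<_{\mathbf{r},m}b\mathbf{X}^\beta$ iff $\mathrm{val}_{\mathbf{r}}(a\mathbf{X}^\alpha)>\mathrm{val}_{\mathbf{r}}(b\mathbf{X}^\beta)$, or they are equal and $\mathbf{X}^\alpha<_m\mathbf{X}^\beta$. $\mathrm{LT}_<(f)$ is the largest term of $f$. Two term orders $<_1,<_2$ are equivalent with respect to $F$ if $\{\mathrm{LT}_{<_1}(f_i)\}_i=\{\mathrm{LT}_{<_2}(f_i)\}_i$. For nonzero $f$, $\mathscr N(f)=\mathrm{conv}\{(\mathrm{val}(c),\alpha):c\mathbf{X}^\alpha\text{ a term of }f\}+\mathbb{R}_{\ge0}(1,0,\dots,0)\subseteq\mathbb{R}^{n+1}$, and $\mathscr N(F)$ is the Minkowski sum of the $\mathscr N(f_i)$. *)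

(* Defs.v *)
From HB Require Import structures.
From mathcomp Require Import all_boot all_order all_algebra.
From mathcomp Require Import mpoly.
From mathcomp Require Import reals.
Set Implicit Arguments. Unset Strict Implicit. Unset Printing Implicit Defensive.
Import Order.TTheory GRing.Theory Num.Theory.
Local Open Scope ring_scope.

(* val : K -> int is the valuation on K^x (its value at 0 is irrelevant:
   val 0 = +oo is handled by never using val at 0). *)
Definition discrete_valuation (K : fieldType) (val : K -> int) : Prop :=
  [/\ (forall x y : K, x != 0 -> y != 0 -> val (x * y) = val x + val y),
      (forall x y : K, x != 0 -> y != 0 -> x + y != 0 ->
          Num.min (val x) (val y) <= val (x + y))
    & (exists pi : K, pi != 0 /\ val pi = 1)].

(* "x and y are congruent to precision N": val (x - y) >= N, with val 0 = +oo *)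
Definition val_close (K : fieldType) (val : K -> int) (N : int) (x y : K) : Prop :=
  x = y \/ N <= val (x - y).

Definition val_complete (K : fieldType) (val : K -> int) : Prop :=
  forall u : nat -> K,
    (forall N : int, exists M : nat, forall p q, (M <= p)%N -> (M <= q)%N ->
        val_close val N (u p) (u q)) ->
    exists l : K, forall N : int, exists M : nat, forall p, (M <= p)%N ->
        val_close val N (u p) l.

Definition monomial_order (n : nat) (le : rel 'X_{1..n}) : Prop :=
  reflexive le /\ antisymmetric le /\ transitive le /\ total le /\
  (forall a b c : 'X_{1..n}, le a b -> le (mnm_add a c) (mnm_add b c)) /\
  (forall a : 'X_{1..n}, le (@mnm0 n) a).

(* a term c X^alpha (c <> 0) is represented by the pair (c, alpha) *)
Definition term (K : fieldType) (n : nat) := (K * 'X_{1..n})%type.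

Definition val_r (K : fieldType) (val : K -> int) (n : nat) (r : 'I_n -> rat)
  (t : term K n) : rat :=
  (val t.1)%:~R - \sum_(i < n) r i * (t.2 i)%:R.

Definition term_lt (K : fieldType) (val : K -> int) (n : nat) (r : 'I_n -> rat)
  (le : rel 'X_{1..n}) (t1 t2 : term K n) : Prop :=
  val_r val r t1 > val_r val r t2 \/
  (val_r val r t1 = val_r val r t2 /\ le t1.2 t2.2 /\ t1.2 != t2.2).

Definition is_term_of (K : fieldType) (n : nat) (f : {mpoly K[n]}) (t : term K n)
  : Prop := t.2 \in msupp f /\ t.1 = f@_(t.2).

Definition is_LT (K : fieldType) (val : K -> int) (n : nat) (r : 'I_n -> rat)
  (le : rel 'X_{1..n}) (f : {mpoly K[n]}) (t : term K n) : Prop :=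
  is_term_of f t /\
  forall t', is_term_of f t' -> t' <> t -> term_lt val r le t' t.

Definition equiv_wrt (K : fieldType) (val : K -> int) (n s : nat)
  (F : 'I_s -> {mpoly K[n]}) (r1 : 'I_n -> rat) (le1 : rel 'X_{1..n})
  (r2 : 'I_n -> rat) (le2 : rel 'X_{1..n}) : Prop :=
  forall (i : 'I_s) (t : term K n), is_LT val r1 le1 (F i) t <-> is_LT val r2 le2 (F i) t.

(* coordinate 0 is the valuation coordinate, coordinate lift ord0 j is alpha_j *)
Definition term_point (R : realType) (K : fieldType) (val : K -> int) (n : nat)
  (t : term K n) : 'rV[R]_n.+1 :=
  \row_(k < n.+1) (if unlift ord0 k is Some j then ((t.2 j)%:R : R)
                   else ((val t.1)%:~R : R)).

Definition e0 (R : realType) (n : nat) : 'rV[R]_n.+1 :=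
  \row_(k < n.+1) (if k == ord0 then 1 else 0).

Definition newton_polyhedron (R : realType) (K : fieldType) (val : K -> int)
  (n : nat) (f : {mpoly K[n]}) : 'rV[R]_n.+1 -> Prop :=
  fun x => exists (lam : 'X_{1..n} -> R) (u : R),
    [/\ (forall a, a \in msupp f -> 0 <= lam a),
        \sum_(a <- msupp f) lam a = 1,
        0 <= u
      & x = \sum_(a <- msupp f) lam a *: @term_point R K val n (f@_a, a) + u *: e0 R n].

Definition newton_polyhedron_fam (R : realType) (K : fieldType) (val : K -> int)
  (n s : nat) (F : 'I_s -> {mpoly K[n]}) : 'rV[R]_n.+1 -> Prop :=
  fun x => exists y : 'I_s -> 'rV[R]_n.+1,
    (forall i, @newton_polyhedron R K val n (F i) (y i)) /\ x = \sum_(i < s) y i.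

Definition is_vertex (R : realType) (m : nat) (P : 'rV[R]_m -> Prop) (v : 'rV[R]_m)
  : Prop :=
  P v /\ forall (x y : 'rV[R]_m) (t : R), P x -> P y -> 0 < t -> t < 1 ->
    v = t *: x + (1 - t) *: y -> x = v /\ y = v.

(* Main.v *)
Require Import Defs.
From HB Require Import structures.
From mathcomp Require Import all_boot all_order all_algebra.
From mathcomp Require Import mpoly.
From mathcomp Require Import reals.
From Stdlib Require List Classical ClassicalEpsilon.
From mathcomp Require Import ring lra.
Set Implicit Arguments. Unset Strict Implicit. Unset Printing Implicit Defensive.
Import Order.TTheory GRing.Theory Num.Theory.
Local Open Scope ring_scope.

Section Gordan.
Variable F : realFieldType.

Definition cstr (m : nat) := (F * ('I_m -> F))%type.
Definition dotp m (w h : 'I_m -> F) := \sum_(j < m) w j * h j.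

Inductive deriv m (cs : list (cstr m)) : F -> ('I_m -> F) -> Prop :=
| dbase g h : List.In (g, h) cs -> deriv cs g h
| dadd g1 h1 g2 h2 : deriv cs g1 h1 -> deriv cs g2 h2 ->
    deriv cs (g1 + g2) (fun j => h1 j + h2 j)
| dscale a g h : 0 < a -> deriv cs g h -> deriv cs (a * g) (fun j => a * h j)
| dext g h h' : deriv cs g h -> (forall j, h j = h' j) -> deriv cs g h'.

Definition feas m (cs : list (cstr m)) (w : 'I_m -> F) :=
  forall g h, List.In (g, h) cs -> 0 < g + dotp w h.

Lemma sep_below (U : list F) : exists x, forall u, List.In u U -> x < u.
Proof.
elim: U => [|u U [x Hx]]; first by exists 0.
have [hxu|hxu] := lerP x u.
  exists (x - 1) => y /= [<-|/Hx]; lra.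
exists (u - 1) => y /= [<-|/Hx]; lra.
Qed.

Lemma sep_above (l : F) (U : list F) : (forall u, List.In u U -> l < u) ->
  exists y, l < y /\ forall u, List.In u U -> y < u.
Proof.
elim: U => [|u U IH] H; first by exists (l + 1); split => //; lra.
have [y [ly Hy]] : exists y, l < y /\ forall u, List.In u U -> y < u.
  by apply: IH => v Hv; apply: H; right.
have lu : l < u by apply: H; left.
have [hyu|hyu] := ltrP y u.
  by exists y; split => // v /= [<-|/Hy].
exists ((l + u) / 2); split; first lra.
move=> v /= [<-|/Hy]; lra.
Qed.

Lemma sep (L U : list F) :
  (forall l u, List.In l L -> List.In u U -> l < u) ->
  exists x, (forall l, List.In l L -> l < x) /\ (forall u, List.In u U -> x < u).
Proof.
elim: L => [|l L IH] H.
  by have [x Hx] := sep_below U; exists x.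
have [x [Hx1 Hx2]] : exists x, (forall l, List.In l L -> l < x) /\ (forall u, List.In u U -> x < u).
  by apply: IH => l' u Hl Hu; apply: H => //; right.
have [lx|xl] := ltrP l x.
  by exists x; split => // l' /= [<-|/Hx1].
have [y [ly Hy]] := sep_above (fun u Hu => H l u (or_introl erefl) Hu).
exists y; split => // l' /= [<-|/Hx1] //; lra.
Qed.

Lemma dotp_lin m (w h1 h2 : 'I_m -> F) a b :
  dotp w (fun j => a * h1 j + b * h2 j) = a * dotp w h1 + b * dotp w h2.
Proof.
rewrite /dotp !mulr_sumr -big_split /=; apply: eq_bigr => j _; ring.
Qed.

Lemma ord_split m (j : 'I_m.+1) :
  j = ord_max \/ exists j', j = widen_ord (leqnSn m) j'.
Proof.
case: (unliftP ord_max j) => [j'|] ->; last by left.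
by right; exists j'; apply: val_inj => /=; rewrite /bump leqNgt ltn_ord.
Qed.

Lemma deriv_lift m (cs : list (cstr m.+1)) (cs' : list (cstr m)) :
  (forall g h, List.In (g, h) cs' -> exists h0, deriv cs g h0 /\
      (forall j, h0 (widen_ord (leqnSn m) j) = h j) /\ h0 ord_max = 0) ->
  forall g h, deriv cs' g h -> exists h0, deriv cs g h0 /\
      (forall j, h0 (widen_ord (leqnSn m) j) = h j) /\ h0 ord_max = 0.
Proof.
move=> Hb g h; elim=> {g h}.
- by move=> g h /Hb.
- move=> g1 h1 g2 h2 _ [k1 [D1 [E1 Z1]]] _ [k2 [D2 [E2 Z2]]].
  exists (fun j => k1 j + k2 j); split; first exact: dadd.
  by split=> [j|]; rewrite ?E1 ?E2 ?Z1 ?Z2 ?addr0.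
- move=> a g h ha _ [k [D [E Z]]].
  exists (fun j => a * k j); split; first exact: dscale.
  by split=> [j|]; rewrite ?E ?Z ?mulr0.
- move=> g h h' _ [k [D [E Z]]] Hhh.
  by exists k; split => //; split => // j; rewrite E Hhh.
Qed.

Theorem gordan m (cs : list (cstr m)) :
  (exists w, feas cs w) \/
  (exists g h, deriv cs g h /\ (forall j, h j = 0) /\ g <= 0).
Proof.
elim: m cs => [|m IH] cs.
  case: (Classical_Prop.classic (exists g h, List.In (g, h) cs /\ g <= 0)).
    move=> [g [h [Hin Hg]]]; right; exists g, h; split; first exact: dbase.
    by split => // -[].
  move=> H; left; exists (fun _ => 0) => g h Hin.
  rewrite /dotp big_ord0 addr0 ltNge; apply/negP => Hg; apply: H; by exists g, h.
pose lst (c : cstr m.+1) := c.2 ord_max.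
pose rst (c : cstr m.+1) := fun j : 'I_m => c.2 (widen_ord (leqnSn m) j).
pose Z := List.filter (fun c => lst c == 0) cs.
pose P := List.filter (fun c => 0 < lst c) cs.
pose N := List.filter (fun c => lst c < 0) cs.
pose prj (c : cstr m.+1) : cstr m := (c.1, rst c).
pose comb (p q : cstr m.+1) : cstr m :=
  ((- lst q) * p.1 + lst p * q.1, fun j => (- lst q) * rst p j + lst p * rst q j).
pose cs' := List.map prj Z ++ List.flat_map (fun p => List.map (comb p) N) P.
have Hin' : forall c', List.In c' cs' -> (exists c, List.In c Z /\ c' = prj c) \/
     (exists p q, List.In p P /\ List.In q N /\ c' = comb p q).
  move=> c' /List.in_app_iff [/List.in_map_iff [c [<- Hc]]|].
    by left; exists c.
  move=> /List.in_flat_map [p [Hp /List.in_map_iff [q [<- Hq]]]].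
  by right; exists p, q.
have dotp_split : forall (w : 'I_m.+1 -> F) h, dotp w h =
    dotp (fun j => w (widen_ord (leqnSn m) j)) (fun j => h (widen_ord (leqnSn m) j))
    + w ord_max * h ord_max.
  by move=> w h; rewrite /dotp big_ord_recr.
case: (IH cs') => [[w' Hw']|[g [h [Hd [Hh Hg]]]]].
- left.
  pose A (c : cstr m.+1) := c.1 + dotp w' (rst c).
  have HZ : forall c, List.In c Z -> 0 < A c.
    move=> [g h] Hc; apply: (Hw' g (rst (g, h))).
    by apply/List.in_app_iff; left; apply/List.in_map_iff; exists (g, h).
  have HPN : forall p q, List.In p P -> List.In q N ->
      0 < (- lst q) * A p + lst p * A q.
    move=> p q Hp Hq.
    have := Hw' _ _ (List.in_or_app _ _ (comb p q) (or_intror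
      (proj2 (List.in_flat_map _ _ _) (ex_intro _ p (conj Hp
        (proj2 (List.in_map_iff _ _ _) (ex_intro _ q (conj erefl Hq)))))))).
    rewrite /comb /= dotp_lin /A.
    set u := dotp _ _; set v := dotp _ _; move=> H; lra.
  pose L := List.map (fun p => - A p / lst p) P.
  pose U := List.map (fun q => A q / (- lst q)) N.
  have Hsep : forall l u, List.In l L -> List.In u U -> l < u.
    move=> l u /List.in_map_iff [p [<- Hp]] /List.in_map_iff [q [<- Hq]].
    have := HPN p q Hp Hq.
    have /List.filter_In [_ lp] := Hp; have /List.filter_In [_ lq] := Hq.
    move: lp lq; set a := lst p; set b := lst q; set Ap := A p; set Aq := A q.
    move=> lp lq H.
    rewrite -subr_gt0.
    have -> : Aq / - b - - Ap / a = ((- b) * Ap + a * Aq) / (a * (- b)).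
      field; apply/andP; split; apply/negP => /eqP E; lra.
    apply: divr_gt0 => //; apply: mulr_gt0 => //; lra.
  have [x [Hx1 Hx2]] := sep Hsep.
  exists (fun j : 'I_m.+1 => if unlift ord_max j is Some j' then w' j' else x).
  move=> g h Hc; rewrite dotp_split unlift_none.
  have -> : dotp (fun j => if unlift ord_max (widen_ord (leqnSn m) j) is Some j'
       then w' j' else x) (fun j => h (widen_ord (leqnSn m) j)) = dotp w' (rst (g, h)).
    apply: eq_bigr => j _.
    have -> : unlift ord_max (widen_ord (leqnSn m) j) = Some j.
      have -> : widen_ord (leqnSn m) j = lift ord_max j by apply: val_inj => /=; rewrite /bump leqNgt ltn_ord.
      by rewrite liftK.
    by [].
  have := HZ (g, h); rewrite /A /= => HZ'.
  have [hl|hl|hl] := ltrgt0P (h ord_max).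
  + have Hp : List.In (g, h) P by apply/List.filter_In; split.
    have := Hx1 _ (proj2 (List.in_map_iff _ _ _) (ex_intro _ (g, h) (conj erefl Hp))).
    rewrite /A /= ltr_pdivrMr //; set d := dotp _ _; move=> H; lra.
  + have Hq : List.In (g, h) N by apply/List.filter_In; split.
    have := Hx2 _ (proj2 (List.in_map_iff _ _ _) (ex_intro _ (g, h) (conj erefl Hq))).
    rewrite /A /= ltr_pdivlMr; last lra.
    set d := dotp _ _; move=> H; lra.
  + have Hz : List.In (g, h) Z by apply/List.filter_In; split => //; rewrite /lst /= hl eqxx.
    by rewrite hl mulr0 addr0; apply: HZ' Hz.
- right.
  have Hb : forall g h, List.In (g, h) cs' -> exists h0, deriv cs g h0 /\
      (forall j, h0 (widen_ord (leqnSn m) j) = h j) /\ h0 ord_max = 0.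
    have dbase' : forall c, List.In c cs -> deriv cs c.1 c.2 by case=> ? ? ?; apply: dbase.
    move=> g0 h1 Hgh.
    case: (Hin' _ Hgh) => [[[g2 h2] [Hc E]]|[p [q [Hp [Hq E]]]]].
    * case: E => -> ->; exists h2; split.
        by apply: dbase; move/List.filter_In: Hc => [].
      by split => //; move/List.filter_In: Hc => [_ /eqP].
    * case: E => -> ->.
      exists (fun j => (- lst q) * p.2 j + lst p * q.2 j); split.
        have /List.filter_In [Hp' lp] := Hp; have /List.filter_In [Hq' lq] := Hq.
        apply: dadd; apply: dscale.
        - by rewrite oppr_gt0.
        - by apply: dbase'.
        - exact: lp.
        - by apply: dbase'.
      by split => //=; rewrite /lst mulNr mulrC addNr.
  have [h0 [D0 [E0 Z0]]] := deriv_lift Hb Hd.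
  exists g, h0; split => //; split => // j.
  by case: (ord_split j) => [->|[j' ->]] //; rewrite E0 Hh.
Qed.

End Gordan.

Section MonoOrder.
Variable n : nat.
Variable le : rel 'X_{1..n}.
Hypothesis Hle : monomial_order le.

Lemma mo_refl a : le a a. Proof. by case: Hle. Qed.
Lemma mo_anti a b : le a b -> le b a -> a = b.
Proof. by case: Hle => _ [H _] h1 h2; apply: H; rewrite h1 h2. Qed.
Lemma mo_trans a b c : le a b -> le b c -> le a c.
Proof. by case: Hle => _ [_ [H _]] h1 h2; apply: H h2. Qed.
Lemma mo_total a b : le a b || le b a.
Proof. by case: Hle => _ [_ [_ [H _]]]; apply: H. Qed.
Lemma mo_addr a b c : le a b -> le (mnm_add a c) (mnm_add b c).
Proof. by case: Hle => _ [_ [_ [_ [H _]]]]; apply: H. Qed.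

Lemma mo_add2 a b c d : le a b -> le c d -> le (mnm_add a c) (mnm_add b d).
Proof.
move=> h1 h2; apply: (mo_trans (mo_addr c h1)).
by rewrite (addmC b c) (addmC b d); apply: mo_addr.
Qed.

Lemma mo_add_strict a b c d : le a b -> a != b -> le c d ->
  mnm_add a c != mnm_add b d.
Proof.
move=> h1 ne h2; apply/eqP => E.
have h3 : le (mnm_add a c) (mnm_add b c) by apply: mo_addr.
have h4 : le (mnm_add b c) (mnm_add b d).
  by rewrite (addmC b c) (addmC b d); apply: mo_addr.
rewrite E in h3; have E2 := mo_anti h4 h3.
by move: ne; rewrite -E in E2; rewrite (addIm E2) eqxx.
Qed.

Lemma mo_scale a b k : (0 < k)%N -> le b a -> b != a ->
  le (mnm_muln b k) (mnm_muln a k) /\ mnm_muln b k != mnm_muln a k.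
Proof.
move=> + h ne; elim: k => [//|k IH] _.
case: k IH => [|k] IH; first by rewrite !mulm1n.
have [IH1 IH2] := IH erefl.
rewrite !(mulmS _ k.+1); split; first exact: mo_add2.
exact: mo_add_strict.
Qed.

Definition msum (I : Type) (r : seq I) (a : I -> 'X_{1..n}) :=
  foldr (fun i acc => mnm_add (a i) acc) (@mnm0 n) r.

Lemma msumE (I : Type) (r : seq I) (a : I -> 'X_{1..n}) j :
  msum r a j = (\sum_(i <- r) a i j)%N.
Proof.
elim: r => [|i r IH]; first by rewrite big_nil; exact: mnm0E.
by rewrite big_cons -IH; exact: mnmDE.
Qed.

Lemma mo_sum (I : Type) (r : seq I) (a b : I -> 'X_{1..n}) :
  (forall i, le (b i) (a i)) ->
  le (msum r b) (msum r a) /\ (has (fun i => b i != a i) r -> msum r b != msum r a).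
Proof.
move=> H; elim: r => [|i r [IH1 IH2]] /=; first by split => //; apply: mo_refl.
split; first exact: mo_add2.
case/orP => [ne|hs]; first exact: mo_add_strict.
rewrite (addmC (b i)) (addmC (a i)); exact: mo_add_strict IH1 (IH2 hs) (H i).
Qed.

End MonoOrder.

Lemma deglex_mo n : monomial_order (fun a b : 'X_{1..n} => (a <= b)%O).
Proof.
split; first by move=> a; exact: lexx.
split; first by move=> a b; exact: le_anti.
split; first by move=> b a c; exact: le_trans.
split; first by move=> a b; exact: le_total.
split; first by move=> a b c h; rewrite lemc_add2l.
by move=> a; exact: le0x.
Qed.

Section LTsec.
Variables (K : fieldType) (val : K -> int) (n : nat).
Implicit Types (f : {mpoly K[n]}) (r : 'I_n -> rat) (le : rel 'X_{1..n}).

Lemma term_lt_asym r le (t1 t2 : term K n) : monomial_order le ->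
  term_lt val r le t1 t2 -> term_lt val r le t2 t1 -> False.
Proof.
move=> Hle [h1|[e1 [l1 n1]]] [h2|[e2 [l2 n2]]].
- by have := lt_trans h1 h2; rewrite ltxx.
- by move: h1; rewrite e2 ltxx.
- by move: h2; rewrite e1 ltxx.
- by move: n1; rewrite (mo_anti Hle l1 l2) eqxx.
Qed.

Lemma term_lt_trans r le (t1 t2 t3 : term K n) : monomial_order le ->
  term_lt val r le t1 t2 -> term_lt val r le t2 t3 -> term_lt val r le t1 t3.
Proof.
move=> Hle [h1|[e1 [l1 n1]]] [h2|[e2 [l2 n2]]].
- by left; apply: lt_trans h1.
- by left; rewrite -e2.
- by left; rewrite e1.
- right; split; first by rewrite e1.
  split; first exact: mo_trans l2.
  apply/eqP => E; move: l1; rewrite E => l1.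
  by move: n2; rewrite (mo_anti Hle l2 l1) eqxx.
Qed.

Lemma term_lt_total r le (t1 t2 : term K n) : monomial_order le ->
  t1.2 != t2.2 -> term_lt val r le t1 t2 \/ term_lt val r le t2 t1.
Proof.
move=> Hle ne.
have [h|h|h] := ltrgtP (val_r val r t1) (val_r val r t2).
- by right; left.
- by left; left.
- case/orP: (mo_total Hle t1.2 t2.2) => hl.
    by left; right.
  by right; right; rewrite eq_sym.
Qed.

Definition islt r le f (a : 'X_{1..n}) :=
  a \in msupp f /\ forall b, b \in msupp f -> b != a ->
    term_lt val r le (f@_b, b) (f@_a, a).

Lemma islt_exists r le f : monomial_order le -> f != 0 -> exists a, islt r le f a.
Proof.
move=> Hle nz.
suff H : forall l : seq 'X_{1..n}, l != [::] -> exists a, a \in l /\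
    forall b, b \in l -> b != a -> term_lt val r le (f@_b, b) (f@_a, a).
  have hne : msupp f != [::] by rewrite msupp_eq0.
  have [a [Ha1 Ha2]] := H (msupp f) hne.
  by exists a; split.
elim => [//|x l IH] _.
case: l IH => [|y l] IH.
  by exists x; split => [|b]; rewrite ?inE // => /eqP ->; rewrite eqxx.
have [a [Ha1 Ha2]] := IH erefl.
have [->|ne] := eqVneq x a.
  exists a; split; first by rewrite inE eqxx.
  by move=> b; rewrite inE => /orP[/eqP->|/Ha2//]; rewrite eqxx.
case: (@term_lt_total r le (f@_x, x) (f@_a, a) Hle ne) => h.
  exists a; split; first by rewrite inE Ha1 orbT.
  by move=> b; rewrite inE => /orP[/eqP->|/Ha2//].
exists x; split; first by rewrite inE eqxx.
move=> b; rewrite inE => /orP[/eqP->|hb]; first by rewrite eqxx.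
move=> nbx; have [->//|nba] := eqVneq b a.
exact: term_lt_trans (Ha2 b hb nba) h.
Qed.

Lemma islt_unique r le f a a' : monomial_order le ->
  islt r le f a -> islt r le f a' -> a = a'.
Proof.
move=> Hle [h1 H1] [h2 H2]; apply/eqP; apply/negPn/negP => ne.
by apply: (term_lt_asym Hle (H2 a h1 ne)); apply: H1; rewrite // eq_sym.
Qed.

Lemma islt_isLT r le f a : islt r le f a -> is_LT val r le f (f@_a, a).
Proof.
move=> [ha H]; split; first by split.
move=> [c b] [/= hb ->] ne; apply: H => //; apply/eqP => E.
by apply: ne; rewrite E.
Qed.

Lemma isLT_islt r le f a t : monomial_order le ->
  islt r le f a -> is_LT val r le f t -> t = (f@_a, a).
Proof.
move=> Hle [ha H] [[hb E] H2].
case: t hb E H2 => c b /= hb -> H2.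
have [->//|ne] := eqVneq b a.
exfalso; apply: (term_lt_asym Hle (H b hb ne)).
apply: H2; first by split.
by move=> [_ E]; move: ne; rewrite E eqxx.
Qed.

Definition ltexp r le f : 'X_{1..n} :=
  ClassicalEpsilon.epsilon (inhabits (@mnm0 n)) (islt r le f).

Lemma ltexpP r le f : monomial_order le -> f != 0 -> islt r le f (ltexp r le f).
Proof.
move=> Hle nz; apply: ClassicalEpsilon.epsilon_spec.
exact: islt_exists.
Qed.

End LTsec.

Section GeoA.
Variables (R : realType) (K : fieldType) (val : K -> int) (n : nat).
Implicit Types (f : {mpoly K[n]}) (w : 'I_n -> rat).

Definition Pt f (a : 'X_{1..n}) : 'rV[R]_n.+1 := term_point R val (f@_a, a).
Definition NP f := @newton_polyhedron R K val n f.

Lemma Pt0 f a : Pt f a 0 ord0 = (val f@_a)%:~R.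
Proof. by rewrite /Pt /term_point mxE unlift_none. Qed.
Lemma PtS f a j : Pt f a 0 (lift ord0 j) = (a j)%:R.
Proof. by rewrite /Pt /term_point mxE liftK. Qed.
Lemma e00 : e0 R n 0 ord0 = 1.
Proof. by rewrite /e0 mxE eqxx. Qed.
Lemma e0S j : e0 R n 0 (lift ord0 j) = 0.
Proof. by rewrite /e0 mxE eq_sym (negbTE (neq_lift _ _)). Qed.

Definition ell w (z : 'rV[R]_n.+1) : R :=
  z 0 ord0 - \sum_(j < n) ratr (w j) * z 0 (lift ord0 j).

Lemma ellD w z1 z2 : ell w (z1 + z2) = ell w z1 + ell w z2.
Proof.
rewrite /ell !mxE.
have -> : \sum_(j < n) ratr (w j) * (z1 + z2) 0 (lift ord0 j) =
  \sum_(j < n) ratr (w j) * z1 0 (lift ord0 j) + \sum_(j < n) ratr (w j) * z2 0 (lift ord0 j).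
  by rewrite -big_split; apply: eq_bigr => j _; rewrite mxE mulrDr.
ring.
Qed.

Lemma ellZ w c z : ell w (c *: z) = c * ell w z.
Proof.
rewrite /ell !mxE mulrBr mulr_sumr; congr (_ - _); apply: eq_bigr => j _.
by rewrite mxE; ring.
Qed.

Lemma ell0 w : ell w 0 = 0.
Proof. by rewrite -(scale0r (0 : 'rV[R]_n.+1)) ellZ mul0r. Qed.

Lemma ell_sum w (I : Type) (r : seq I) (P : pred I) (G : I -> 'rV[R]_n.+1) :
  ell w (\sum_(i <- r | P i) G i) = \sum_(i <- r | P i) ell w (G i).
Proof. by apply: (big_morph _ (ellD w) (ell0 w)). Qed.

Lemma ellPt w f a : ell w (Pt f a) = ratr (val_r val w (f@_a, a)).
Proof.
rewrite /ell Pt0 /val_r rmorphB /= ratr_int rmorph_sum; congr (_ - _).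
by apply: eq_bigr => j _; rewrite PtS rmorphM /= ratr_nat.
Qed.

Lemma elle0 w : ell w (e0 R n) = 1.
Proof. by rewrite /ell e00 big1 ?subr0 // => j _; rewrite e0S mulr0. Qed.

Lemma sum_ind_sc (r : seq 'X_{1..n}) a (c : R) : uniq r -> a \in r ->
  \sum_(b <- r) (b == a)%:R * c = c.
Proof.
move=> u ha; rewrite (bigD1_seq a) //= eqxx mul1r big1 ?addr0 //.
by move=> b /negbTE ->; rewrite mul0r.
Qed.

Lemma sum_ind_vec (r : seq 'X_{1..n}) a (c : R) (G : 'X_{1..n} -> 'rV[R]_n.+1) :
  uniq r -> a \in r ->
  \sum_(b <- r) ((b == a)%:R * c) *: G b = c *: G a.
Proof.
move=> u ha; rewrite (bigD1_seq a) //= eqxx mul1r big1 ?addr0 //.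
by move=> b /negbTE ->; rewrite mul0r scale0r.
Qed.

Lemma Pt_NP f a : a \in msupp f -> NP f (Pt f a).
Proof.
move=> ha; exists (fun b => (b == a)%:R * 1), 0; split.
- by move=> b _; rewrite mulr1 ler0n.
- by rewrite sum_ind_sc // msupp_uniq.
- by [].
- by rewrite sum_ind_vec ?msupp_uniq // scale1r scale0r addr0.
Qed.

Lemma np_ge f a w z : a \in msupp f ->
  (forall b, b \in msupp f -> b != a -> val_r val w (f@_a, a) < val_r val w (f@_b, b)) ->
  NP f z -> ell w (Pt f a) <= ell w z /\ (ell w z = ell w (Pt f a) -> z = Pt f a).
Proof.
move=> ha Hs [lam [u [Hl Hsum Hu ->]]].
pose D b := ell w (Pt f b) - ell w (Pt f a).
have HD : forall b, b \in msupp f -> 0 <= lam b * D b.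
  move=> b hb; apply: mulr_ge0; first exact: Hl.
  rewrite /D subr_ge0 !ellPt ler_rat.
  by have [->//|nb] := eqVneq b a; apply: ltW; apply: Hs.
have key : ell w (\sum_(b <- msupp f) lam b *: Pt f b + u *: e0 R n) - ell w (Pt f a) =
    \sum_(b <- msupp f) lam b * D b + u.
  rewrite ellD ellZ elle0 mulr1 ell_sum.
  have -> : ell w (Pt f a) = \sum_(b <- msupp f) lam b * ell w (Pt f a).
    by rewrite -mulr_suml Hsum mul1r.
  rewrite addrAC -sumrB; congr (_ + _); apply: eq_bigr => b _.
  by rewrite ellZ /D; ring.
have Hpos : 0 <= \sum_(b <- msupp f) lam b * D b.
  by rewrite big_seq; apply: sumr_ge0 => b hb; apply: HD.
split.
  rewrite -subr_ge0 key; lra.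
move=> E; move: key; rewrite E subrr => /esym key.
have u0 : u = 0 by lra.
have S0 : \sum_(b <- msupp f) lam b * D b = 0 by lra.
have Hz : forall b, b \in msupp f -> b != a -> lam b = 0.
  move=> b hb nb.
  have : (\sum_(b <- msupp f | b \in msupp f) lam b * D b == 0).
    by rewrite -big_seq S0.
  rewrite psumr_eq0; last by move=> i; apply: HD.
  move=> /allP /(_ b hb); rewrite hb /= mulf_eq0 => /orP[/eqP//|].
  rewrite /D subr_eq0 !ellPt => /eqP /(fmorph_inj _) E2.
  by have := Hs b hb nb; rewrite E2 ltxx.
have la : lam a = 1.
  move: Hsum; rewrite (bigD1_seq a) ?msupp_uniq //= big_seq_cond big1 ?addr0 //.
  by move=> b /andP[hb nb]; apply: Hz.
rewrite u0 scale0r addr0 (bigD1_seq a) ?msupp_uniq //= big_seq_cond big1 ?addr0.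
  by rewrite la scale1r.
by move=> b /andP[hb nb]; rewrite Hz // scale0r.
Qed.

End GeoA.

Section GeoB.
Variables (R : realType) (K : fieldType) (val : K -> int) (n : nat).
Implicit Types (f : {mpoly K[n]}) (w : 'I_n -> rat).
Local Notation Pt := (@Pt R K val n).
Local Notation NP := (@NP R K val n).
Local Notation E0 := (e0 R n).

Lemma NP_convex f p q t : NP f p -> NP f q -> 0 <= t -> t <= 1 ->
  NP f (t *: p + (1 - t) *: q).
Proof.
move=> [l1 [u1 [Hl1 Hs1 Hu1 ->]]] [l2 [u2 [Hl2 Hs2 Hu2 ->]]] t0 t1.
exists (fun b => t * l1 b + (1 - t) * l2 b), (t * u1 + (1 - t) * u2); cbv beta; split.
- move=> b hb; apply: addr_ge0; apply: mulr_ge0 => //; rewrite ?subr_ge0 //;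
  by [apply: Hl1 | apply: Hl2].
- by rewrite big_split /= -!mulr_sumr Hs1 Hs2; ring.
- by apply: addr_ge0; apply: mulr_ge0 => //; rewrite subr_ge0.
- rewrite !scalerDr !scaler_sumr !scalerDl !scalerA addrACA; congr (_ + _); last first.
    by rewrite -!scalerDl; congr (_ *: _); ring.
  by rewrite -big_split; apply: eq_bigr => a _ /=; rewrite scalerDl !scalerA -!scalerDl; congr (_ *: _); ring.
Qed.


Lemma NP_add_e0 f p c : NP f p -> 0 <= c -> NP f (p + c *: E0).
Proof.
move=> [l [u [Hl Hs Hu ->]]] hc; exists l, (u + c); split => //.
  by apply: addr_ge0.
by rewrite -addrA -scalerDl.
Qed.

Variables (s : nat) (F : 'I_s -> {mpoly K[n]}).
Local Notation NF := (@newton_polyhedron_fam R K val n s F).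
Definition vsum (a : 'I_s -> 'X_{1..n}) := \sum_(i < s) Pt (F i) (a i).

Lemma NF_convex p q t : NF p -> NF q -> 0 <= t -> t <= 1 -> NF (t *: p + (1 - t) *: q).
Proof.
move=> [y1 [H1 ->]] [y2 [H2 ->]] t0 t1.
exists (fun i => t *: y1 i + (1 - t) *: y2 i); split.
  by move=> i; exact: (NP_convex (H1 i) (H2 i) t0 t1).
by rewrite !scaler_sumr -big_split.
Qed.

Lemma NF_replace (y : 'I_s -> 'rV[R]_n.+1) i0 p :
  (forall i, NP (F i) (y i)) -> NP (F i0) p -> NF (\sum_(i < s) y i + (p - y i0)).
Proof.
move=> Hy Hp; exists (fun i => if i == i0 then p else y i); split.
  by move=> i; case: eqP => [->|_]; [exact: Hp | exact: Hy].
rewrite (bigD1 i0) //= [in RHS](bigD1 i0) //= eqxx.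
have -> : \sum_(i < s | i != i0) (if i == i0 then p else y i) = \sum_(i < s | i != i0) y i.
  by apply: eq_bigr => i /negbTE ->.
by rewrite addrAC [y i0 + _]addrC subrK.
Qed.

Lemma vsum_NF a : (forall i, a i \in msupp (F i)) -> NF (vsum a).
Proof.
move=> Ha; exists (fun i => Pt (F i) (a i)); split => // i; exact: Pt_NP.
Qed.

Lemma vertex_of_strict a w : (forall i, a i \in msupp (F i)) ->
  (forall i b, b \in msupp (F i) -> b != a i ->
     val_r val w ((F i)@_(a i), a i) < val_r val w ((F i)@_b, b)) ->
  is_vertex NF (vsum a).
Proof.
move=> Ha Hs; split; first exact: vsum_NF.
have Hge : forall x, NF x -> ell w (vsum a) <= ell w x /\ (ell w x = ell w (vsum a) -> x = vsum a).
  move=> x [y [Hy ->]]; rewrite /vsum !ell_sum.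
  have H i := np_ge (Ha i) (Hs i) (Hy i).
  split; first by apply: ler_sum => i _; case: (H i).
  move=> E.
  have E2 : \sum_(i < s) (ell w (y i) - ell w (Pt (F i) (a i))) = 0.
    by rewrite sumrB E subrr.
  apply: eq_bigr => i _; apply: (proj2 (H i)); apply/eqP; rewrite -subr_eq0; apply/eqP.
  apply: (psumr_eq0P _ E2) => //.
  by move=> j _; rewrite subr_ge0; case: (H j).
move=> x y t Hx Hy t0 t1 E.
have [hx1 hx2] := Hge x Hx; have [hy1 hy2] := Hge y Hy.
have H : ell w (vsum a) = t * ell w x + (1 - t) * ell w y by rewrite {1}E ellD !ellZ.
have ex : ell w x = ell w (vsum a) by nra.
have ey : ell w y = ell w (vsum a) by nra.
by split; [apply: hx2 | apply: hy2].
Qed.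

End GeoB.

Ltac neq0 := apply/negP => /eqP ?; lra.
Ltac fld := field; first [done | neq0].

Section GeoC.
Variables (R : realType) (K : fieldType) (val : K -> int) (n : nat).
Variables (s : nat) (F : 'I_s -> {mpoly K[n]}).
Local Notation Pt := (@Pt R K val n).
Local Notation NP := (@NP R K val n).
Local Notation E0 := (e0 R n).
Local Notation NF := (@newton_polyhedron_fam R K val n s F).

Section Cone.
Variable v : 'rV[R]_n.+1.
Hypothesis Hv : NF v.
Definition C d := exists e, 0 < e /\ NF (v + e *: d).

Lemma shrink d e1 e : NF (v + e1 *: d) -> 0 < e1 -> 0 <= e -> e <= e1 ->
  NF (v + e *: d).
Proof.
move=> H1 he1 he0 hee.
have ht0 : 0 <= e / e1 by apply: divr_ge0 => //; apply: ltW.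
have ht1 : e / e1 <= 1 by rewrite ler_pdivrMr // mul1r.
have := NF_convex H1 Hv ht0 ht1.
suff -> : (e / e1) *: (v + e1 *: d) + (1 - e / e1) *: v = v + e *: d by [].
apply/rowP => k; rewrite !mxE; fld.
Qed.

Lemma C0 : C 0.
Proof. by exists 1; split => //; rewrite scaler0 addr0. Qed.

Lemma C_add d1 d2 : C d1 -> C d2 -> C (d1 + d2).
Proof.
have key : forall d1 d2 e1 e2, 0 < e1 -> 0 < e2 -> e1 <= e2 ->
    NF (v + e1 *: d1) -> NF (v + e2 *: d2) -> C (d1 + d2).
  move=> x1 x2 e1 e2 he1 he2 le H1 H2.
  have H2' := shrink H2 he2 (ltW he1) le.
  have h0 : (0 : R) <= 1 / 2 by lra.
  have h1 : (1 : R) / 2 <= 1 by lra.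
  have Hc := NF_convex H1 H2' h0 h1.
  exists (e1 / 2); split; first by apply: divr_gt0.
  suff -> : v + e1 / 2 *: (x1 + x2) = 1 / 2 *: (v + e1 *: x1) + (1 - 1 / 2) *: (v + e1 *: x2) by [].
  apply/rowP => k; rewrite !mxE; fld.
move=> [e1 [he1 H1]] [e2 [he2 H2]].
have [le|le] := lerP e1 e2; first exact: (key _ _ e1 e2).
rewrite addrC; apply: (key _ _ e2 e1) => //; exact: ltW.
Qed.

Lemma C_scale c d : 0 < c -> C d -> C (c *: d).
Proof.
move=> hc [e [he H]]; exists (e / c); split; first exact: divr_gt0.
by rewrite scalerA divfK //; neq0.
Qed.

Lemma C_vertex d : is_vertex NF v -> C d -> C (- d) -> d = 0.
Proof.
move=> [_ Hext].
have key : forall d e1 e2, 0 < e1 -> 0 < e2 -> e1 <= e2 ->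
    NF (v + e1 *: d) -> NF (v + e2 *: (- d)) -> d = 0.
  move=> x e1 e2 he1 he2 le H1 H2.
  have H2' := shrink H2 he2 (ltW he1) le.
  have h0 : (0 : R) < 1 / 2 by lra.
  have h1 : (1 : R) / 2 < 1 by lra.
  have E : v = 1 / 2 *: (v + e1 *: x) + (1 - 1 / 2) *: (v + e1 *: - x).
    apply/rowP => k; rewrite !mxE; fld.
  have [E1 _] := Hext _ _ _ H1 H2' h0 h1 E.
  have : e1 *: x = 0.
    by apply: (addrI v); rewrite addr0.
  by move/eqP; rewrite scaler_eq0 => /orP[/eqP e10|/eqP//]; move: he1; rewrite e10 ltxx.
move=> [e1 [he1 H1]] [e2 [he2 H2]].
have [le|le] := lerP e1 e2; first exact: (key _ e1 e2).
apply/eqP; rewrite -oppr_eq0; apply/eqP.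
apply: (key _ e2 e1) => //; [exact: ltW | by rewrite opprK].
Qed.
End Cone.

Definition Dir (g : rat) (h : 'I_n -> rat) : 'rV[R]_n.+1 :=
  \row_k (if unlift ord0 k is Some j then - ratr (h j) else ratr g).

Lemma Dir_add g1 h1 g2 h2 :
  Dir (g1 + g2) (fun j => h1 j + h2 j) = Dir g1 h1 + Dir g2 h2.
Proof.
apply/rowP => k; rewrite !mxE; case: (unlift ord0 k) => [j|]; rewrite rmorphD //=.
by rewrite opprD.
Qed.

Lemma Dir_scale a g h : Dir (a * g) (fun j => a * h j) = ratr a *: Dir g h.
Proof.
apply/rowP => k; rewrite !mxE; case: (unlift ord0 k) => [j|]; rewrite rmorphM //=.
by rewrite mulrN.
Qed.

Lemma Dir_ext g h h' : (forall j, h j = h' j) -> Dir g h = Dir g h'.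
Proof.
move=> E; apply/rowP => k; rewrite !mxE; case: (unlift ord0 k) => [j|] //.
by rewrite E.
Qed.

Lemma Dir_zero g h : (forall j, h j = 0) -> Dir g h = ratr g *: E0.
Proof.
move=> E; apply/rowP => k; rewrite !mxE.
case: unliftP => [j ->|->]; rewrite ?E ?rmorph0 ?oppr0.
  by rewrite eq_sym (negbTE (neq_lift _ _)) mulr0.
by rewrite eqxx mulr1.
Qed.

Lemma In_mem (T : eqType) (x : T) (l : seq T) : List.In x l <-> x \in l.
Proof.
elim: l => [//|y l IH] /=; rewrite inE; split.
  by case=> [->|/IH ->]; rewrite ?eqxx ?orbT.
by case/orP => [/eqP ->|/IH]; [left | right].
Qed.

Definition cG (w0 : 'I_n -> rat) (a : 'I_s -> 'X_{1..n}) i b : rat :=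
  val_r val w0 ((F i)@_b, b) - val_r val w0 ((F i)@_(a i), a i).
Definition cH (a : 'I_s -> 'X_{1..n}) i (b : 'X_{1..n}) : 'I_n -> rat :=
  fun j => (a i j)%:R - (b j)%:R.
Definition cst (w0 : 'I_n -> rat) (a : 'I_s -> 'X_{1..n}) : list (cstr rat n) :=
  List.flat_map (fun i => List.map (fun b => (cG w0 a i b, cH a i b))
     (List.filter (fun b => b != a i) (msupp (F i)))) (enum 'I_s).

Lemma cst_In w0 a g h : List.In (g, h) (cst w0 a) ->
  exists i b, [/\ b \in msupp (F i), b != a i, g = cG w0 a i b & h = cH a i b].
Proof.
move=> /List.in_flat_map [i [_ /List.in_map_iff [b [[<- <-] /List.filter_In [/In_mem hb nb]]]]].
by exists i, b; split.
Qed.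

Lemma cst_In' w0 a i b : b \in msupp (F i) -> b != a i ->
  List.In (cG w0 a i b, cH a i b) (cst w0 a).
Proof.
move=> hb nb; apply/List.in_flat_map; exists i; split.
  by apply/In_mem; rewrite mem_enum.
apply/List.in_map_iff; exists b; split => //.
by apply/List.filter_In; split => //; apply/In_mem.
Qed.

Lemma val_r_add (w0 w' : 'I_n -> rat) (t : term K n) :
  val_r val (fun j => w0 j + w' j) t = val_r val w0 t - \sum_j w' j * (t.2 j)%:R.
Proof.
rewrite /val_r -addrA -opprD -big_split /=; congr (_ - _).
by apply: eq_bigr => j _; rewrite mulrDl.
Qed.

Lemma cst_feas w0 a w' : feas (cst w0 a) w' ->
  forall i b, b \in msupp (F i) -> b != a i ->
  val_r val (fun j => w0 j + w' j) ((F i)@_(a i), a i) <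
  val_r val (fun j => w0 j + w' j) ((F i)@_b, b).
Proof.
move=> H i b hb nb; have := H _ _ (cst_In' w0 hb nb).
rewrite !val_r_add /cG /cH /dotp /=.
have -> : \sum_(j < n) w' j * ((a i j)%:R - (b j)%:R) =
   \sum_(j < n) w' j * (a i j)%:R - \sum_(j < n) w' j * (b j)%:R.
  by rewrite -sumrB; apply: eq_bigr => j _; rewrite mulrBr.
move=> H2; lra.
Qed.

Lemma deriv_nonempty m (cs : list (cstr rat m)) g h : deriv cs g h -> exists c, List.In c cs.
Proof. by elim => // g0 h0 Hin; exists (g0, h0). Qed.

Lemma strict_vertex v a : is_vertex NF v -> v = vsum R val F a ->
  (forall i, a i \in msupp (F i)) ->
  exists w, forall i b, b \in msupp (F i) -> b != a i ->
     val_r val w ((F i)@_(a i), a i) < val_r val w ((F i)@_b, b).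
Proof.
move=> Hvx Ev Ha.
have HNv : NF v by case: Hvx.
pose w00 := fun _ : 'I_n => (0 : rat).
case: (gordan (cst w00 a)) => [[w' Hw']|[g [h [Hd [Hh Hg]]]]].
  by exists (fun j => w00 j + w' j); apply: cst_feas.
exfalso.
have vr0 : forall t : term K n, val_r val w00 t = (val t.1)%:~R.
  by move=> t; rewrite /val_r big1 ?subr0 // => j _; rewrite mul0r.
pose Inv g h := exists d, d != 0 /\ C v d /\ C v (Dir g h - d).
have HI : Inv g h.
  elim: Hd {Hh Hg} => {g h}.
  - move=> g h /cst_In [i [b [hb nb -> ->]]].
    have ED : Dir (cG w00 a i b) (cH a i b) = Pt (F i) b - Pt (F i) (a i).
      apply/rowP => k; rewrite !mxE; case: unliftP => [j _|_].
        by rewrite /cH rmorphB /= !ratr_nat opprB.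
      by rewrite /cG !vr0 rmorphB /= !ratr_int.
    exists (Dir (cG w00 a i b) (cH a i b)); split; last split.
    + rewrite ED subr_eq0; apply/negP => /eqP E.
      suff Eb : b = a i by move: nb; rewrite Eb eqxx.
      apply/mnmP => j.
      have := congr1 (fun z : 'rV[R]_n.+1 => z 0 (lift ord0 j)) E.
      by rewrite /= !PtS => /eqP; rewrite eqr_nat => /eqP.
    + exists 1; split => //; rewrite scale1r ED Ev /vsum.
      apply: (NF_replace (y := fun i => Pt (F i) (a i))) => [j|]; exact: Pt_NP.
    + by rewrite subrr; apply: C0.
  - move=> g1 h1 g2 h2 _ [d1 [n1 [c1 c1']]] _ [d2 [n2 [c2 c2']]].
    exists d1; split => //; split => //.
    rewrite Dir_add addrAC; apply: C_add => //.
    by rewrite -(subrK d2 (Dir g2 h2)); apply: C_add.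
  - move=> c g h hc _ [d [nd [cd cd']]].
    exists (ratr c *: d); split.
      by rewrite scaler_eq0 negb_or nd andbT fmorph_eq0; apply/negP => /eqP c0; move: hc; rewrite c0 ltxx.
    split; first by apply: C_scale => //; rewrite ltr0q.
    by rewrite Dir_scale -scalerBr; apply: C_scale => //; rewrite ltr0q.
  - move=> g h h' _ [d [nd [cd cd']]] E.
    by exists d; split => //; split => //; rewrite -(Dir_ext g E).
case: HI => d [nd [cd cd']].
have [[g0 h0] Hin] := deriv_nonempty Hd.
have [i0 _] := cst_In Hin.
have CE : C v E0.
  exists 1; split => //; rewrite scale1r.
  case: HNv => y [Hy Ey]; rewrite Ev in Ey.
  have -> : v + E0 = \sum_(i < s) y i + ((y i0 + 1 *: E0) - y i0).
    by rewrite Ev Ey addrAC subrr add0r scale1r.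
  apply: NF_replace => //; apply: NP_add_e0 => //; exact: Hy.
have Cm : C v (- d).
  have -> : - d = (Dir g h - d) + (- ratr g) *: E0.
    by rewrite (Dir_zero g Hh) addrAC -scalerDl subrr scale0r add0r.
  apply: C_add => //.
  have [g0'|gn] := eqVneq g 0.
    by rewrite g0' rmorph0 oppr0 scale0r; apply: C0.
  apply: C_scale => //; rewrite oppr_gt0 ltrq0 lt_neqAle gn Hg.
  done.
by move: nd; rewrite (C_vertex HNv Hvx cd Cm) eqxx.
Qed.

End GeoC.

Section GeoD.
Variables (R : realType) (K : fieldType) (val : K -> int) (n : nat).
Variables (s : nat) (F : 'I_s -> {mpoly K[n]}).
Local Notation Pt := (@Pt R K val n).
Local Notation NP := (@NP R K val n).
Local Notation E0 := (e0 R n).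
Local Notation NF := (@newton_polyhedron_fam R K val n s F).

Lemma vertex_pure v : is_vertex NF v ->
  exists a, (forall i, a i \in msupp (F i)) /\ v = vsum R val F a.
Proof.
move=> Hvx; have [[y [Hy Ev]] Hext] := Hvx.
have Hsum : forall i0 p q t, NP (F i0) p -> NP (F i0) q -> 0 < t -> t < 1 ->
    y i0 = t *: p + (1 - t) *: q -> p = y i0.
  move=> i0 p q t Hp Hq t0 t1 E.
  have Hx := NF_replace Hy Hp; have Hx' := NF_replace Hy Hq.
  have E2 : v = t *: (\sum_(i < s) y i + (p - y i0)) + (1 - t) *: (\sum_(i < s) y i + (q - y i0)).
    rewrite Ev; set S := \sum_(i < s) y i; rewrite E.
    by apply/rowP => k; rewrite !mxE; ring.
  have [E3 _] := Hext _ _ _ Hx Hx' t0 t1 E2.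
  move: E3; rewrite Ev; set S := \sum_(i < s) y i => E3.
  apply/eqP; rewrite -subr_eq0; apply/eqP; apply: (addrI S); by rewrite addr0.
have Hpt : forall i, exists a, a \in msupp (F i) /\ y i = Pt (F i) a.
  move=> i; case: (Hy i) => lam [u [Hl Hs Hu Ey]].
  have [a [ha la]] : exists a, a \in msupp (F i) /\ 0 < lam a.
    apply: Classical_Prop.NNPP => H.
    have : \sum_(b <- msupp (F i)) lam b <= 0.
      rewrite big_seq; apply: sumr_le0 => b hb; rewrite leNgt; apply/negP => lb.
      by apply: H; exists b.
    rewrite Hs; lra.
  have la1 : lam a <= 1.
    have : \sum_(b <- msupp (F i) | b != a) lam b >= 0.
      rewrite big_seq_cond; apply: sumr_ge0 => b /andP[hb _]; exact: Hl.
    move: Hs; rewrite (bigD1_seq a) ?msupp_uniq //=; lra.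
  pose t := lam a / 2.
  have t0 : 0 < t by rewrite /t; lra.
  have t1 : t < 1 by rewrite /t; lra.
  have h1t : 1 - t != 0 by rewrite subr_eq0 eq_sym lt_eqF.
  pose lam' b := (lam b - (b == a)%:R * t) / (1 - t).
  have Hz : NP (F i) (\sum_(b <- msupp (F i)) lam' b *: Pt (F i) b + (u / (1 - t)) *: E0).
    exists lam', (u / (1 - t)); split => //.
    - move=> b hb; rewrite /lam'; apply: divr_ge0; last lra.
      have := Hl b hb; case: eqP => [->|_]; rewrite /t /= ?mul1r ?mul0r ?subr0 => H; lra.
    - rewrite /lam' -mulr_suml sumrB Hs sum_ind_sc ?msupp_uniq //.
      by rewrite divff.
    - by apply: divr_ge0; lra.
  have Eq : y i = t *: Pt (F i) a + (1 - t) *: (\sum_(b <- msupp (F i)) lam' b *: Pt (F i) b + (u / (1 - t)) *: E0).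
    rewrite scalerDr scaler_sumr scalerA mulrC divfK //.
    have -> : \sum_(b <- msupp (F i)) (1 - t) *: (lam' b *: Pt (F i) b) =
        \sum_(b <- msupp (F i)) lam b *: Pt (F i) b - \sum_(b <- msupp (F i)) ((b == a)%:R * t) *: Pt (F i) b.
      rewrite -sumrB; apply: eq_bigr => b _; rewrite scalerA /lam' mulrC divfK //.
      by rewrite scalerBl.
    rewrite sum_ind_vec ?msupp_uniq // Ey.
    by rewrite addrA [t *: _ + _]addrC subrK.
  by exists a; split => //; symmetry; apply: (Hsum i _ _ t (@Pt_NP R K val n (F i) a ha) Hz t0 t1 Eq).
pose a i := ClassicalEpsilon.epsilon (inhabits (@mnm0 n))
   (fun a => a \in msupp (F i) /\ y i = Pt (F i) a).
have Ha : forall i, a i \in msupp (F i) /\ y i = Pt (F i) (a i).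
  by move=> i; exact: (ClassicalEpsilon.epsilon_spec _ _ (Hpt i)).
exists a; split; first by move=> i; case: (Ha i).
by rewrite Ev /vsum; apply: eq_bigr => i _; case: (Ha i).
Qed.

End GeoD.

Lemma rat_pos_frac (a : rat) : 0 < a ->
  exists p q : nat, [/\ (0 < p)%N, (0 < q)%N & a = p%:R / q%:R].
Proof.
move=> ha; exists `|numq a|%N, `|denq a|%N.
have hn : 0 < numq a by rewrite numq_gt0.
have hd := denq_gt0 a.
split; rewrite ?absz_gt0 ?gt_eqF //.
by rewrite !natr_absz !gtr0_norm // divq_num_den.
Qed.

Section Final.
Variables (R : realType) (K : fieldType) (val : K -> int) (n : nat).
Variables (s : nat) (F : 'I_s -> {mpoly K[n]}).
Local Notation Pt := (@Pt R K val n).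
Local Notation NF := (@newton_polyhedron_fam R K val n s F).

Lemma strict_LT r le : monomial_order le -> (forall i, F i != 0) ->
  exists w, forall i b, b \in msupp (F i) -> b != ltexp val r le (F i) ->
    val_r val w ((F i)@_(ltexp val r le (F i)), ltexp val r le (F i)) <
    val_r val w ((F i)@_b, b).
Proof.
move=> Hle HF.
pose a i := ltexp val r le (F i).
have Ha : forall i, islt val r le (F i) (a i) by move=> i; apply: ltexpP.
case: (gordan (cst val F r a)) => [[w' Hw']|[g [h [Hd [Hh Hg]]]]].
  by exists (fun j => r j + w' j); apply: cst_feas.
exfalso.
pose Pos (h : 'I_n -> rat) := exists N : nat, (0 < N)%N /\ exists A B : 'X_{1..n},
   [/\ le B A, B != A & forall j, N%:R * h j = (A j)%:R - (B j)%:R].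
pose Inv (g : rat) h := 0 <= g /\ (g = 0 -> Pos h).
have HI : Inv g h.
  elim: Hd {Hh Hg} => {g h}.
  - move=> g h /cst_In [i [b [hb nb -> ->]]].
    have [_ Hi] := Ha i.
    case: (Hi b hb nb) => [lt|[eq [lb nb']]]; rewrite /cG.
      split; first by rewrite subr_ge0 ltW.
      by move/eqP; rewrite subr_eq0 => /eqP E; move: lt; rewrite E ltxx.
    split; first by rewrite eq subrr.
    move=> _; exists 1%N; split => //; exists (a i), b; split => //.
    by move=> j; rewrite mul1r /cH.
  - move=> g1 h1 g2 h2 _ [g1p I1] _ [g2p I2]; split; first exact: addr_ge0.
    move=> e; have e1 : g1 = 0 by lra.
    have e2 : g2 = 0 by lra.
    have [N1 [N1p [A1 [B1 [l1 n1 E1]]]]] := I1 e1.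
    have [N2 [N2p [A2 [B2 [l2 n2 E2]]]]] := I2 e2.
    exists (N1 * N2)%N; split; first by rewrite muln_gt0 N1p N2p.
    exists (mnm_add (mnm_muln A1 N2) (mnm_muln A2 N1)),
           (mnm_add (mnm_muln B1 N2) (mnm_muln B2 N1)).
    have [s1 t1] := mo_scale Hle N2p l1 n1.
    have [s2 t2] := mo_scale Hle N1p l2 n2.
    split; first exact: mo_add2.
      have X := mo_add_strict Hle s1 t1 s2. exact X.
    move=> j; rewrite !mnmDE !mulmnE !natrD !natrM.
    transitivity (N2%:R * (N1%:R * h1 j) + N1%:R * (N2%:R * h2 j)); first ring.
    rewrite E1 E2; ring.
  - move=> c g h hc _ [gp I]; split; first by apply: mulr_ge0 => //; apply: ltW.
    move=> /eqP; rewrite mulf_eq0 => /orP[/eqP c0|/eqP g0].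
      by move: hc; rewrite c0 ltxx.
    have [N [Np [A [B [l nab E]]]]] := I g0.
    have [p [q [pp qp Ec]]] := rat_pos_frac hc.
    exists (N * q)%N; split; first by rewrite muln_gt0 Np qp.
    exists (mnm_muln A p), (mnm_muln B p).
    have [sc tc] := mo_scale Hle pp l nab.
    split => // j.
    have qn : (q%:R : rat) != 0 by rewrite pnatr_eq0 -lt0n.
    rewrite !mulmnE !natrM Ec.
    transitivity (p%:R * (N%:R * h j) * (q%:R / q%:R)); first ring.
    rewrite divff // mulr1 E; ring.
  - move=> g h h' _ [gp I] E; split => // /I [N [Np [A [B [l nab E2]]]]].
    exists N; split => //; exists A, B; split => // j; rewrite -E.
    exact: E2.
have [gp I] := HI.
have g0 : g = 0 by lra.
have [N [Np [A [B [l nab E]]]]] := I g0.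
move: nab; suff -> : B = A by rewrite eqxx.
apply/mnmP => j; have := E j; rewrite Hh mulr0.
by move/eqP; rewrite eq_sym subr_eq0 eqr_nat eq_sym => /eqP.
Qed.

Lemma vsum0 (a : 'I_s -> 'X_{1..n}) :
  vsum R val F a 0 ord0 = (\sum_(i < s) val (F i)@_(a i))%:~R.
Proof.
rewrite /vsum summxE rmorph_sum; apply: eq_bigr => i _; exact: Pt0.
Qed.

Lemma vsumS (a : 'I_s -> 'X_{1..n}) j :
  vsum R val F a 0 (lift ord0 j) = (\sum_(i < s) a i j)%:R.
Proof.
rewrite /vsum summxE natr_sum; apply: eq_bigr => i _; exact: PtS.
Qed.

Lemma sum_vr r (a : 'I_s -> 'X_{1..n}) :
  \sum_(i < s) val_r val r ((F i)@_(a i), a i) =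
  (\sum_(i < s) val (F i)@_(a i))%:~R - \sum_(j < n) r j * (\sum_(i < s) a i j)%:R.
Proof.
rewrite /val_r sumrB rmorph_sum; congr (_ - _).
rewrite exchange_big; apply: eq_bigr => j _ /=.
by rewrite natr_sum mulr_sumr.
Qed.

Lemma part3_comb r1 le1 (a1 a2 : 'I_s -> 'X_{1..n}) : monomial_order le1 ->
  (forall i, islt val r1 le1 (F i) (a1 i)) -> (forall i, a2 i \in msupp (F i)) ->
  vsum R val F a1 = vsum R val F a2 -> forall i, a1 i = a2 i.
Proof.
move=> Hle H1 H2 E.
have Ec0 : (\sum_(i < s) val (F i)@_(a1 i)) = \sum_(i < s) val (F i)@_(a2 i).
  apply: (@intr_inj R); rewrite -!vsum0; by rewrite E.
have Ecj : forall j, (\sum_(i < s) a1 i j)%N = (\sum_(i < s) a2 i j)%N.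
  move=> j; apply/eqP; rewrite -(eqr_nat R) -!vsumS; by rewrite E.
have Hsum : \sum_(i < s) val_r val r1 ((F i)@_(a1 i), a1 i) =
            \sum_(i < s) val_r val r1 ((F i)@_(a2 i), a2 i).
  rewrite !sum_vr Ec0; congr (_ - _); apply: eq_bigr => j _; by rewrite Ecj.
have Hle1 : forall i, val_r val r1 ((F i)@_(a1 i), a1 i) <= val_r val r1 ((F i)@_(a2 i), a2 i).
  move=> i; have [->//|ne] := eqVneq (a2 i) (a1 i).
  have [_ Hi] := H1 i.
  by case: (Hi _ (H2 i) ne) => [lt|[eq _]]; [apply: ltW | rewrite eq].
have Heq : forall i, val_r val r1 ((F i)@_(a1 i), a1 i) = val_r val r1 ((F i)@_(a2 i), a2 i).
  have S0 : \sum_(i < s) (val_r val r1 ((F i)@_(a2 i), a2 i) - val_r val r1 ((F i)@_(a1 i), a1 i)) = 0.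
    by rewrite sumrB Hsum subrr.
  move=> i; apply/eqP; rewrite eq_sym -subr_eq0; apply/eqP.
  apply: (psumr_eq0P _ S0) => // j _; rewrite subr_ge0; exact: Hle1.
have Hle2 : forall i, le1 (a2 i) (a1 i).
  move=> i; have [->|ne] := eqVneq (a2 i) (a1 i); first exact: mo_refl.
  have [_ Hi] := H1 i.
  case: (Hi _ (H2 i) ne) => [lt|[_ [l _]]] //.
  by move: lt; rewrite Heq ltxx.
have Em : msum (index_enum 'I_s) a2 = msum (index_enum 'I_s) a1.
  by apply/mnmP => j; rewrite !msumE; apply/esym; apply: Ecj.
move=> i; apply/eqP; apply/negPn/negP => ne.
have [_ H] := mo_sum Hle (index_enum 'I_s) Hle2.
have Hh : has (fun i => a2 i != a1 i) (index_enum 'I_s).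
  by apply/hasP; exists i; [rewrite mem_index_enum | rewrite eq_sym].
by move: (H Hh); rewrite Em eqxx.
Qed.

End Final.


Unset Implicit Arguments.

Theorem mainTheorem5 (R : realType) (K : fieldType) (val : K -> int)
  (hval : discrete_valuation val) (hcomplete : val_complete val)
  (n s : nat) (F : 'I_s -> {mpoly K[n]}) (hF : forall i, F i != 0) :
  exists phi : ('I_n -> rat) -> rel 'X_{1..n} -> 'rV[R]_n.+1,
    [/\ (forall r le, monomial_order le ->
           is_vertex (@newton_polyhedron_fam R K val n s F) (phi r le)),
        (forall v, is_vertex (@newton_polyhedron_fam R K val n s F) v ->
           exists r le, monomial_order le /\ phi r le = v)
      & (forall r1 le1 r2 le2, monomial_order le1 -> monomial_order le2 ->
           (phi r1 le1 = phi r2 le2 <-> equiv_wrt val F r1 le1 r2 le2))].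
Proof.
pose phi := fun r le => vsum R val F (fun i => ltexp val r le (F i)).
exists phi; split.
- move=> r le Hle.
  have [w Hw] := strict_LT val r Hle hF.
  apply: (vertex_of_strict R (w := w)) => [i|i b hb nb]; last exact: Hw.
  by case: (ltexpP val r Hle (hF i)).
- move=> v Hv.
  have [a [Ha Ev]] := vertex_pure Hv.
  have [w Hw] := strict_vertex Hv Ev Ha.
  exists w, (fun a b => (a <= b)%O); split; first exact: deglex_mo.
  rewrite Ev /phi /vsum; apply: eq_bigr => i _; congr (Pt _ _ _ _).
  apply: (islt_unique (deglex_mo n)); first by apply: ltexpP; [exact: deglex_mo | exact: hF].
  by split => // b hb nb; left; apply: Hw.
- move=> r1 le1 r2 le2 H1 H2; split.
  + move=> E i t.
    have e := part3_comb H1 (fun i => ltexpP val r1 H1 (hF i))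
      (fun i => proj1 (ltexpP val r2 H2 (hF i))) E i.
    split => Ht.
      rewrite (isLT_islt H1 (ltexpP val r1 H1 (hF i)) Ht) e.
      by apply: islt_isLT; apply: ltexpP.
    rewrite (isLT_islt H2 (ltexpP val r2 H2 (hF i)) Ht) -e.
    by apply: islt_isLT; apply: ltexpP.
  + move=> Heq; rewrite /phi /vsum; apply: eq_bigr => i _.
    have L1 := islt_isLT (ltexpP val r1 H1 (hF i)).
    have L2 := proj1 (Heq i _) L1.
    by case: (isLT_islt H2 (ltexpP val r2 H2 (hF i)) L2) => _ ->.
Qed.
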